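(* Let $H=\ell^2(\mathbb{N})$ with its standard orthonormal basis, $K(H)$ the compact operators on $H$ represented by infinite matrices, and let $A=(a_{ij})\in\ell^\infty(\mathbb{N}^2)$ be such that $S_A(T)=A\circ T$ is a nonzero $*$-preserving map $S_A\colon K(H)\to K(H)$ (i.e. $S_A(T^* )=S_A(T)^*$). If $S_A$ is multiplicative, then $|a_{ij}|=1$ and $a_{ii}=1$ for all $i,j$.
   Context: $A\circ T$ is the entrywise product of $A$ with the matrix of $T$; $\ell^\infty(\mathbb{N}^2)$ denotes infinite matrices with uniformly bounded entries; multiplicative means $S_A(BC)=S_A(B)S_A(C)$ for all $B,C\in K(H)$. *)

(* Defs.v *)
From HB Require Import structures.
From mathcomp Require Import all_boot all_order all_algebra.
From mathcomp Require Import all_classical all_reals all_analysis.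
From mathcomp Require Import complex.
Set Implicit Arguments. Unset Strict Implicit. Unset Printing Implicit Defensive.
Import Order.TTheory GRing.Theory Num.Theory.
Import numFieldTopology.Exports numFieldNormedType.Exports.
Local Open Scope ring_scope.
Local Open Scope classical_set_scope.

(* Vectors of H = l^2(N) are sequences x : nat -> R[i] (coordinates in the
   standard orthonormal basis); operators are infinite matrices
   T : nat -> nat -> R[i], with T i j = <T e_j, e_i>. *)

Section L2.
Variable R : realType.
(* the cast to numFieldType equips R[i] with its norm (modulus) topology *)
Local Notation C := (R[i] : numFieldType).

Definition l2 (x : nat -> C) : Prop :=
  cvgn (series (fun n => ComplexField.Normc.normc (x n) ^+ 2)).

Definition l2norm2 (x : nat -> C) : R :=
  limn (series (fun n => ComplexField.Normc.normc (x n) ^+ 2)).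

Definition mxapply (T : nat -> nat -> C) (x : nat -> C) : nat -> C :=
  fun i => limn (series (fun j => (T i j * x j : C))).

Definition bounded_op (T : nat -> nat -> C) : Prop :=
  [/\ (forall x, l2 x -> forall i, cvgn (series (fun j => (T i j * x j : C)))),
      (forall x, l2 x -> l2 (mxapply T x)) &
      exists M : R, forall x, l2 x -> l2norm2 (mxapply T x) <= M * l2norm2 x].

Definition compact_op (T : nat -> nat -> C) : Prop :=
  bounded_op T /\
  forall u : nat -> nat -> C,
    (forall n, l2 (u n)) ->
    (exists M : R, forall n, l2norm2 (u n) <= M) ->
    exists phi : nat -> nat, {homo phi : m n / (m < n)%N} /\
      exists y, l2 y /\
        (fun n => l2norm2 (fun i => mxapply T (u (phi n)) i - y i)) @ \oo --> 0.

Definition mxmul (B D : nat -> nat -> C) : nat -> nat -> C :=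
  fun i j => limn (series (fun k => (B i k * D k j : C))).

Definition mxadj (T : nat -> nat -> C) : nat -> nat -> C :=
  fun i j => (T j i)^*.

Definition schur (A T : nat -> nat -> C) : nat -> nat -> C :=
  fun i j => A i j * T i j.

End L2.

(* Main.v *)
Require Import Defs.
From HB Require Import structures.
From mathcomp Require Import all_boot all_order all_algebra.
From mathcomp Require Import all_classical all_reals all_analysis.
From mathcomp Require Import complex.
Import Order.TTheory GRing.Theory Num.Theory.
From mathcomp Require Import lra.
Import numFieldTopology.Exports numFieldNormedType.Exports.
Local Open Scope ring_scope.
Local Open Scope classical_set_scope.

Lemma series_single (K : numFieldType) (f : nat -> K) j :
  (forall b, b != j -> f b = 0) -> series f @ \oo --> f j.
Proof.
move=> hf; apply: cvg_near_cst; exists j.+1 => // n /= hn.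
rewrite /series /= (bigD1_seq j) //= ?mem_iota ?iota_uniq ?add0n ?subn0 //.
by rewrite big1 ?addr0.
Qed.

Lemma lim_single (K : numFieldType) (f : nat -> K) j :
  (forall b, b != j -> f b = 0) -> limn (series f) = f j.
Proof. by move=> hf; apply: cvg_lim => //; exact: series_single. Qed.

Lemma term_le_series (K : realFieldType) (f : nat -> K) j :
  (forall n, 0 <= f n) -> f j <= series f j.+1.
Proof.
move=> f0; rewrite /series /= (bigD1_seq j) //= ?mem_iota ?iota_uniq ?add0n ?subn0 //.
rewrite -[leLHS]addr0; apply: lerD => //.
by apply: sumr_ge0 => k _; exact: f0.
by rewrite ltnSn.
Qed.

Lemma inc_homo (f : nat -> nat) : increasing_seq f -> {homo f : m n / (m < n)%N}.
Proof. move=> hf m n; rewrite !ltnNge; apply: contra => h.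
by have := hf n m => /= <-.
Qed.

Section S.
Variable R : realType.
Local Notation C := (R[i] : numFieldType).
Definition E (i j : nat) : nat -> nat -> C :=
  fun a b => if (a == i) && (b == j) then 1 else 0.

Lemma mxapply_E i j x : mxapply (E i j) x = fun a => if a == i then x j else 0.
Proof.
apply/funext => a; rewrite /mxapply (@lim_single _ _ j).
  by rewrite /E eqxx andbT; case: ifP => _; rewrite ?mul1r ?mul0r.
by move=> b /negbTE bj; rewrite /E bj andbF mul0r.
Qed.

Lemma normc0 : ComplexField.Normc.normc (0 : R[i]) = 0.
Proof. by rewrite /ComplexField.Normc.normc /= expr0n /= addr0 sqrtr0. Qed.

Lemma normc2 (z : R[i]) : ComplexField.Normc.normc z ^+ 2 = (complex.Re z) ^+ 2 + (complex.Im z) ^+ 2.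
Proof. case: z => a b /=; by rewrite sqr_sqrtr // addr_ge0 // sqr_ge0. Qed.

Lemma l2_single i (c : C) : l2 (fun a => if a == i then c else 0).
Proof.
apply/cvg_ex; exists (ComplexField.Normc.normc c ^+ 2).
have := @series_single R (fun n => ComplexField.Normc.normc (if n == i then c else 0) ^+ 2) i.
rewrite eqxx; apply => b /negbTE ->; by rewrite normc0 expr0n.
Qed.

Lemma l2norm2_single i (c : C) :
  l2norm2 (fun a => if a == i then c else 0) = ComplexField.Normc.normc c ^+ 2.
Proof.
rewrite /l2norm2 (@lim_single R _ i) ?eqxx // => b /negbTE ->.
by rewrite normc0 expr0n.
Qed.
Lemma term_le_l2 (x : nat -> C) j : l2 x ->
  ComplexField.Normc.normc (x j) ^+ 2 <= l2norm2 x.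
Proof.
move=> hx; rewrite /l2norm2.
set f := fun n => ComplexField.Normc.normc (x n) ^+ 2.
have f0 : forall n, 0 <= f n by move=> n; exact: sqr_ge0.
apply: le_trans (nondecreasing_cvgn_le _ hx j.+1).
  exact: (@term_le_series _ f j f0).
move=> m n hmn; rewrite /series /=.
exact: (@nondecreasing_series _ f xpredT 0 (fun k _ _ => f0 k)).
Qed.

Lemma inc_ge (f : nat -> nat) : {homo f : m n / (m < n)%N} -> forall n, (n <= f n)%N.
Proof.
move=> hf; elim=> // n ih; apply: leq_ltn_trans ih _; exact: hf.
Qed.

Lemma inc_cvg (f : nat -> nat) : {homo f : m n / (m < n)%N} -> f @ \oo --> \oo.
Proof.
move=> hf P [N _ PN]; exists N => // m /= hm; apply: PN.
by rewrite /= (leq_trans hm) // inc_ge.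
Qed.
Lemma E_compact i j : compact_op (E i j).
Proof.
split.
  split.
  - move=> x hx a; apply/cvg_ex; exists (E i j a j * x j).
    apply: (@series_single _ (fun b => E i j a b * x b) j) => b /negbTE bj.
    by rewrite /E bj andbF mul0r.
  - by move=> x hx; rewrite mxapply_E; exact: l2_single.
  - exists 1 => x hx; rewrite mxapply_E l2norm2_single mul1r; exact: term_le_l2.
move=> u hu [M hM].
pose r n := complex.Re (u n j); pose s n := complex.Im (u n j).
have hn : forall n, ComplexField.Normc.normc (u n j) ^+ 2 <= M.
  by move=> n; exact: le_trans (@term_le_l2 (u n) j (hu n)) (hM n).
have hr : forall n, `|r n| <= M + 1.
  move=> n; have := hn n; rewrite normc2 -/(r n) -/(s n) => h.
  have h1 := sqr_ge0 (s n); have h2 := normr_ge0 (r n).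
  have h3 : `|r n| ^+ 2 = r n ^+ 2 by rewrite real_normK // num_real.
  nra.
have hs : forall n, `|s n| <= M + 1.
  move=> n; have := hn n; rewrite normc2 -/(r n) -/(s n) => h.
  have h1 := sqr_ge0 (r n); have h2 := normr_ge0 (s n).
  have h3 : `|s n| ^+ 2 = s n ^+ 2 by rewrite real_normK // num_real.
  nra.
have br : bounded_fun r.
  exists (M + 1); split; first exact: num_real.
  by move=> B hB x _ /=; exact: le_trans (hr x) (ltW hB).
have [f1 f1i f1c] := bolzano_weierstrass br.
have bs : bounded_fun (s \o f1).
  exists (M + 1); split; first exact: num_real.
  by move=> B hB x _ /=; exact: le_trans (hs (f1 x)) (ltW hB).
have [f2 f2i f2c] := bolzano_weierstrass bs.
have h1 := @inc_homo _ f1i; have h2 := @inc_homo _ f2i.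
pose a0 := limn (r \o f1); pose b0 := limn ((s \o f1) \o f2).
have ca : (r \o (f1 \o f2)) @ \oo --> a0 := cvg_comp _ _ (@inc_cvg _ h2) f1c.
have cb : (s \o (f1 \o f2)) @ \oo --> b0 := f2c.
exists (f1 \o f2); split; first by move=> m n mn /=; apply: h1; apply: h2.
pose y := (fun a : nat => if a == i then (@Complex R a0 b0 : C) else 0).
exists y; split; first exact: l2_single.
have eq : (fun n => l2norm2 (fun i0 => mxapply (E i j) (u ((f1 \o f2) n)) i0 - y i0))
   = (fun n => (r ((f1 \o f2) n) - a0) ^+ 2 + (s ((f1 \o f2) n) - b0) ^+ 2).
  apply/funext => n; rewrite mxapply_E.
  have -> : (fun i0 => (if i0 == i then u ((f1 \o f2) n) j else 0) - y i0)
      = (fun i0 => if i0 == i then u ((f1 \o f2) n) j - (@Complex R a0 b0 : C) else 0).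
    by apply/funext => i0; rewrite /y; case: ifP => _; rewrite ?subrr.
  rewrite l2norm2_single normc2 /r /s.
  by case: (u ((f1 \o f2) n) j).
rewrite eq.
have c1 : (fun n => r ((f1 \o f2) n) - a0) @ \oo --> 0.
  rewrite -(subrr a0); apply: (@cvgB _ _ _ _ _ (r \o (f1 \o f2)) (fun=> a0)) => //.
  exact: cvg_cst.
have c2 : (fun n => s ((f1 \o f2) n) - b0) @ \oo --> 0.
  rewrite -(subrr b0); apply: (@cvgB _ _ _ _ _ (s \o (f1 \o f2)) (fun=> b0)) => //.
  exact: cvg_cst.
have := cvgD (cvgM c1 c1) (cvgM c2 c2).
rewrite mulr0 addr0; exact.
Qed.
End S.

Theorem corollary4p4 (R : realType) (A : nat -> nat -> R[i]) :
  (exists M : R, forall i j, ComplexField.Normc.normc (A i j) <= M) ->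
  (forall T, compact_op T -> compact_op (schur A T)) ->
  (exists T, compact_op T /\ schur A T <> (fun _ _ => 0)) ->
  (forall T, compact_op T -> schur A (mxadj T) = mxadj (schur A T)) ->
  (forall B D, compact_op B -> compact_op D ->
     schur A (mxmul B D) = mxmul (schur A B) (schur A D)) ->
  forall i j, `|A i j| = 1 /\ A i i = 1.
Proof.
move=> _ _ [T [_ hT]] hadj hmul.
have mul : forall i j k, A i k = A i j * A j k.
  move=> i j k; have := hmul _ _ (E_compact R i j) (E_compact R j k).
  move/(congr1 (fun F => F i k)); rewrite /schur /mxmul.
  rewrite (@lim_single _ _ j); last first.
    by move=> b /negbTE bj; rewrite /E bj andbF ?mulr0 ?mul0r.
  rewrite (@lim_single _ _ j); last first.
    by move=> b /negbTE bj; rewrite /E bj andbF ?mulr0 ?mul0r.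
  by rewrite /E !eqxx /= !mulr1.
have adj : forall i j, A j i = (A i j)^*.
  move=> i j; have := hadj _ (E_compact R i j).
  move/(congr1 (fun F => F j i)); rewrite /schur /mxadj /E !eqxx /=.
  by rewrite conjC1 !mulr1.
have [p [q hpq]] : exists p q, A p q != 0.
  case: (pselect (exists p q, A p q != 0)) => // hn; exfalso; apply: hT.
  apply/funext => p; apply/funext => q; rewrite /schur.
  have -> : A p q = 0 by apply/eqP/negP => h; apply: hn; exists p, q; exact/negP.
  by rewrite mul0r.
have hpp : A p p = 1.
  by apply: (mulIf hpq); rewrite /= mul1r -mul.
have hii : forall i, A i i = 1.
  move=> i; rewrite (mul i p i) (adj p i) mulrC -(adj p i) -mul; exact: hpp.
move=> i j; split; last exact: hii.
apply/eqP; rewrite -sqrp_eq1 ?normr_ge0 // normCK -(adj i j) -mul hii //.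
Qed.
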